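(* Let $\psi\in[0,2\pi)$ and let $\kappa\in\mathbb{C}$ with $\operatorname{Im}(\kappa)\neq 0$ satisfy $$\cos(\kappa\cos\psi)+\cos(\kappa\sin\psi)-2=0.$$ Then $$\cos\psi\,\sin(\kappa\cos\psi)+\sin\psi\,\sin(\kappa\sin\psi)\neq 0.$$ *)

(* Defs.v *)
From Stdlib Require Import Reals.
Open Scope R_scope.

Record Cplx := mkC { Cre : R; Cim : R }.

Definition C0 : Cplx := mkC 0 0.
Definition Cofr (r : R) : Cplx := mkC r 0.
Definition Cadd (z w : Cplx) : Cplx := mkC (Cre z + Cre w) (Cim z + Cim w).
Definition Csub (z w : Cplx) : Cplx := mkC (Cre z - Cre w) (Cim z - Cim w).
Definition Cscale (r : R) (z : Cplx) : Cplx := mkC (r * Cre z) (r * Cim z).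

(* complex cosine and sine: cos(a+ib) = cos a cosh b - i sin a sinh b,
   sin(a+ib) = sin a cosh b + i cos a sinh b *)
Definition Ccos (z : Cplx) : Cplx :=
  mkC (cos (Cre z) * cosh (Cim z)) (- (sin (Cre z) * sinh (Cim z))).
Definition Csin (z : Cplx) : Cplx :=
  mkC (sin (Cre z) * cosh (Cim z)) (cos (Cre z) * sinh (Cim z)).

(* Main.v *)
Require Import Defs.
From Stdlib Require Import Reals Lra Psatz.
Open Scope R_scope.

Lemma sq_id (X Y C S : R) : X^2+Y^2=1 -> C^2-S^2=1 ->
  (Y*C)^2 - (X*S)^2 = 1 - (X*C)^2 + (Y*S)^2.
Proof. intros h1 h2.
assert ((X^2+Y^2)*(C^2-S^2) = 1) by (rewrite h1, h2; ring). nra. Qed.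

Lemma key (c s X1 Y1 C1 S1 X2 Y2 C2 S2 : R) :
  c^2+s^2=1 -> X1^2+Y1^2=1 -> X2^2+Y2^2=1 -> C1^2-S1^2=1 -> C2^2-S2^2=1 ->
  X1*C1 + X2*C2 = 2 -> Y1*S1 + Y2*S2 = 0 ->
  c*(Y1*C1) + s*(Y2*C2) = 0 -> c*(X1*S1) + s*(X2*S2) = 0 ->
  Y2*S2 = 0 /\ (c^2-s^2)*(X2*C2)^2 - 4*c^2*(X2*C2) + (1+2*c^2) = 0.
Proof.
intros hc h1 h2 h3 h4 E1 E2 G1 G2.
pose proof (sq_id _ _ _ _ h1 h3) as L1.
pose proof (sq_id _ _ _ _ h2 h4) as L2.
set (wr := X2*C2) in *. set (wi := -(Y2*S2)).
assert (Z1 : X1*C1 = 2 - wr) by lra.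
assert (Z2 : Y1*S1 = wi) by (unfold wi in *; lra).
assert (Ga : c^2*(Y1*C1)^2 = s^2*(Y2*C2)^2).
{ assert (c*(Y1*C1) = -(s*(Y2*C2))) by lra.
  replace (c^2*(Y1*C1)^2) with ((c*(Y1*C1))^2) by ring. rewrite H. ring. }
assert (Gb : c^2*(X1*S1)^2 = s^2*(X2*S2)^2).
{ assert (c*(X1*S1) = -(s*(X2*S2))) by lra.
  replace (c^2*(X1*S1)^2) with ((c*(X1*S1))^2) by ring. rewrite H. ring. }
assert (Gc : c^2*((Y1*C1)*(X1*S1)) = s^2*((Y2*C2)*(X2*S2))).
{ assert (c*(Y1*C1) = -(s*(Y2*C2))) by lra.
  assert (c*(X1*S1) = -(s*(X2*S2))) by lra.
  replace (c^2*((Y1*C1)*(X1*S1))) with ((c*(Y1*C1))*(c*(X1*S1))) by ring.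
  rewrite H, H0. ring. }
assert (ReF : (c^2-s^2)*(wr^2 - wi^2) - 4*c^2*wr + (1+2*c^2) = 0).
{ assert (e1 : c^2*((Y1*C1)^2 - (X1*S1)^2) = s^2*((Y2*C2)^2-(X2*S2)^2)) by lra.
  rewrite L1, L2, Z1, Z2 in e1. fold wr in e1.
  replace (Y2*S2) with (-wi) in e1 by (unfold wi; ring).
  assert (s^2 = 1 - c^2) by lra. rewrite H in e1 |- *. nra. }
assert (ImF : 2*(c^2-s^2)*wr*wi - 4*c^2*wi = 0).
{ assert (e : (Y1*C1)*(X1*S1) = (X1*C1)*(Y1*S1)) by ring.
  assert (e' : (Y2*C2)*(X2*S2) = (X2*C2)*(Y2*S2)) by ring.
  rewrite e, e', Z1, Z2 in Gc. fold wr in Gc.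
  replace (Y2*S2) with (-wi) in Gc by (unfold wi; ring).
  assert (s^2 = 1 - c^2) by lra. rewrite H in Gc |- *. nra. }
assert (wi = 0).
{ destruct (Req_dec wi 0) as [|Hn]; auto.
  assert (hb : 2*(c^2-s^2)*wr - (c^2-s^2) - (1+2*c^2) = 0).
  { apply (Rmult_eq_reg_r wi); [|auto]. assert (s^2 = 1 - c^2) by lra. rewrite H in *. nra. }
  assert (hd : (c^2-s^2)*((wr-1)^2 + wi^2) = 0).
  { assert (s^2 = 1 - c^2) by lra. rewrite H in *. nra. }
  assert (hd0 : c^2-s^2 = 0).
  { apply Rmult_integral in hd. destruct hd as [|h]; auto.
    exfalso. assert (0 < wi^2) by (nra). nra. }
  nra. }
split. { unfold wi in H. lra. }
rewrite H in ReF. lra.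
Qed.

Lemma cosh_sq x : cosh x ^2 - sinh x ^2 = 1.
Proof. unfold cosh, sinh. rewrite exp_Ropp. pose proof (exp_pos x). field. lra. Qed.

Lemma cosh_pos x : 0 < cosh x.
Proof. unfold cosh. pose proof (exp_pos x). pose proof (exp_pos (-x)). lra. Qed.

Lemma sinh_nz x : x <> 0 -> sinh x <> 0.
Proof. intros hx h. unfold sinh in h. apply hx.
assert (exp x = exp (-x)) by lra. apply exp_inv in H. lra. Qed.

Lemma cosh_even x : cosh (-x) = cosh x.
Proof. unfold cosh. rewrite Ropp_involutive. lra. Qed.

Lemma cosh_mono0 p q : 0 <= p -> p < q -> cosh p < cosh q.
Proof. intros hp hpq. unfold cosh. rewrite !exp_Ropp.
assert (hE : 1 <= exp p). { destruct hp as [hp|hp]. left. rewrite <- exp_0. apply exp_increasing; auto. subst; rewrite exp_0; lra. }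
assert (hEF : exp p < exp q) by (apply exp_increasing; auto).
set (E := exp p) in *. set (F := exp q) in *.
assert (E * /E = 1) by (field; lra). assert (F * /F = 1) by (field; lra).
assert (0 < /E) by (apply Rinv_0_lt_compat; lra).
assert (0 < /F) by (apply Rinv_0_lt_compat; lra).
assert (/F < /E) by (apply Rinv_lt_contravar; nra).
assert (/F < 1) by (rewrite <- Rinv_1; apply Rinv_lt_contravar; lra).
assert (/E - /F = (F - E) * (/E * /F)) by (field; lra).
assert (/E * /F < 1) by nra.
nra. Qed.

Lemma cosh_mono x y : x^2 < y^2 -> cosh x < cosh y.
Proof. intros h.
assert (cosh x = cosh (Rabs x)) by (unfold Rabs; destruct (Rcase_abs x); [rewrite cosh_even|]; auto).
assert (cosh y = cosh (Rabs y)) by (unfold Rabs; destruct (Rcase_abs y); [rewrite cosh_even|]; auto).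
rewrite H, H0. apply cosh_mono0. apply Rabs_pos.
rewrite <- (pow2_abs x), <- (pow2_abs y) in h.
pose proof (Rabs_pos x). pose proof (Rabs_pos y). nra. Qed.

Theorem mainTheorem4 (psi : R) (kappa : Cplx) :
  0 <= psi < 2 * PI ->
  Cim kappa <> 0 ->
  Csub (Cadd (Ccos (Cscale (cos psi) kappa)) (Ccos (Cscale (sin psi) kappa)))
       (Cofr 2) = C0 ->
  Cadd (Cscale (cos psi) (Csin (Cscale (cos psi) kappa)))
       (Cscale (sin psi) (Csin (Cscale (sin psi) kappa))) <> C0.
Proof.
intros _ hb H Hg.
destruct kappa as [a b]. simpl in hb.
unfold Csub, Cadd, Ccos, Csin, Cscale, Cofr, C0 in H, Hg. simpl in H, Hg.
injection H as E1 E2. injection Hg as G1 G2.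
set (c := cos psi) in *. set (s := sin psi) in *.
assert (hc : c^2 + s^2 = 1) by (unfold c, s; pose proof (sin2_cos2 psi); unfold Rsqr in H; nra).
pose proof (sin2_cos2 (c*a)) as h1. pose proof (sin2_cos2 (s*a)) as h2. unfold Rsqr in h1, h2.
pose proof (cosh_sq (c*b)) as h3. pose proof (cosh_sq (s*b)) as h4.
set (X1 := cos (c*a)) in *. set (Y1 := sin (c*a)) in *.
set (X2 := cos (s*a)) in *. set (Y2 := sin (s*a)) in *.
pose proof (cosh_pos (c*b)) as p1. pose proof (cosh_pos (s*b)) as p2.
set (C1 := cosh (c*b)) in *. set (S1 := sinh (c*b)) in *.
set (C2 := cosh (s*b)) in *. set (S2 := sinh (s*b)) in *.
assert (h1' : X1^2+Y1^2=1) by lra. assert (h2' : X2^2+Y2^2=1) by lra.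
destruct (key c s X1 Y1 C1 S1 X2 Y2 C2 S2) as [K1 Q2]; try lra.
destruct (key s c X2 Y2 C2 S2 X1 Y1 C1 S1) as [K2 Q1]; try lra.
assert (cz : c = 0 -> X1 = 1 /\ C1 = 1).
{ intro e. unfold X1, C1. rewrite e, !Rmult_0_l, cos_0. unfold cosh. rewrite Ropp_0, exp_0. lra. }
assert (sz : s = 0 -> X2 = 1 /\ C2 = 1).
{ intro e. unfold X2, C2. rewrite e, !Rmult_0_l, cos_0. unfold cosh. rewrite Ropp_0, exp_0. lra. }
assert (cn : c <> 0 -> X1^2 = 1 /\ 1 < C1).
{ intro e. assert (S1 <> 0) by (apply sinh_nz; intro; apply Rmult_integral in H; tauto).
  assert (Y1 = 0). { apply Rmult_integral in K2. destruct K2; tauto. }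
  split. nra. assert (0 < S1^2) by nra. nra. }
assert (sn : s <> 0 -> X2^2 = 1 /\ 1 < C2).
{ intro e. assert (S2 <> 0) by (apply sinh_nz; intro; apply Rmult_integral in H; tauto).
  assert (Y2 = 0). { apply Rmult_integral in K1. destruct K1; tauto. }
  split. nra. assert (0 < S2^2) by nra. nra. }
destruct (Req_dec c 0) as [ec|ec].
{ destruct (cz ec). assert (s <> 0) by (intro; subst; nra). destruct (sn H1).
  rewrite ec in Q2, hc. assert (s^2 = 1) by lra. rewrite H4 in Q2.
  assert ((X2*C2)^2 = C2^2) by (replace ((X2*C2)^2) with (X2^2*C2^2) by ring; rewrite H2; ring). nra. }
destruct (Req_dec s 0) as [es|es].
{ destruct (sz es). destruct (cn ec).
  rewrite es in Q1, hc. assert (c^2 = 1) by lra. rewrite H3 in Q1.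
  assert ((X1*C1)^2 = C1^2) by (replace ((X1*C1)^2) with (X1^2*C1^2) by ring; rewrite H1; ring). nra. }
destruct (cn ec) as [x1 c1]. destruct (sn es) as [x2 c2].
assert (X1 = 1 \/ X1 = -1) by (assert ((X1-1)*(X1+1)=0) by nra; apply Rmult_integral in H; lra).
assert (X2 = 1 \/ X2 = -1) by (assert ((X2-1)*(X2+1)=0) by nra; apply Rmult_integral in H0; lra).
destruct H as [e1|e1]; destruct H0 as [e2|e2]; rewrite e1, e2 in *.
- nra.
- assert (c^2 - s^2 < 0) by nra.
  assert (C1 < C2) by (unfold C1, C2; apply cosh_mono; assert (0 < b^2) by nra; nra).
  nra.
- assert (c^2 - s^2 > 0) by nra.
  assert (C2 < C1) by (unfold C1, C2; apply cosh_mono; assert (0 < b^2) by nra; nra).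
  nra.
- nra.
Qed.
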